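(* Let $V_1,V_2,V_3,Y,Z\in\mathbb{R}^3$ with $\|Y\|=\|Z\|$ and $Y,Z\in\operatorname{span}^+(V_1,V_2,V_3)$. Then at least one of the inequalities $\langle V_1,Y\rangle>\langle V_1,Z\rangle$, $\langle V_2,Y\rangle>\langle V_2,Z\rangle$, $\langle V_3,Y\rangle>\langle V_3,Z\rangle$ fails.
   Context: $\operatorname{span}^+(V_1,V_2,V_3)=\{\lambda_1V_1+\lambda_2V_2+\lambda_3V_3:\lambda_1,\lambda_2,\lambda_3>0\}$. *)

(* Defs.v *)
From mathcomp Require Import all_boot all_order all_algebra.
From mathcomp Require Import reals.
Set Implicit Arguments. Unset Strict Implicit. Unset Printing Implicit Defensive.
Import Order.TTheory GRing.Theory Num.Theory.
Local Open Scope ring_scope.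

Definition dot3 (R : realType) (u v : 'rV[R]_3) : R := \sum_(i < 3) u 0 i * v 0 i.

Definition enorm3 (R : realType) (u : 'rV[R]_3) : R := Num.sqrt (dot3 u u).

Definition span_pos (R : realType) (V1 V2 V3 : 'rV[R]_3) : 'rV[R]_3 -> Prop :=
  fun X => exists l1 l2 l3 : R, [/\ 0 < l1, 0 < l2, 0 < l3 &
                                   X = l1 *: V1 + l2 *: V2 + l3 *: V3].

(* Main.v *)
Require Import Defs.
From mathcomp Require Import all_boot all_order all_algebra.
From mathcomp Require Import reals.
From mathcomp Require Import ring lra.
Import Order.TTheory GRing.Theory Num.Theory.
Local Open Scope ring_scope.

Lemma dot3_lin (R : realType) (a : R) (u v w : 'rV[R]_3) :
  dot3 (a *: u + v) w = a * dot3 u w + dot3 v w.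
Proof.
rewrite /dot3 mulr_sumr -big_split /=; apply: eq_bigr => i _.
rewrite !mxE; ring.
Qed.

Lemma dot3Z (R : realType) (a : R) (u w : 'rV[R]_3) :
  dot3 (a *: u) w = a * dot3 u w.
Proof.
rewrite /dot3 mulr_sumr; apply: eq_bigr => i _.
rewrite !mxE; ring.
Qed.

Lemma dot3C (R : realType) (u v : 'rV[R]_3) : dot3 u v = dot3 v u.
Proof. by rewrite /dot3; apply: eq_bigr => i _; rewrite mulrC. Qed.

Lemma dot3_ge0 (R : realType) (u : 'rV[R]_3) : 0 <= dot3 u u.
Proof. by rewrite /dot3; apply: sumr_ge0 => i _; rewrite -expr2 sqr_ge0. Qed.

Theorem lemma5p3 (R : realType) (V1 V2 V3 Y Z : 'rV[R]_3) :
  enorm3 Y = enorm3 Z ->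
  span_pos V1 V2 V3 Y -> span_pos V1 V2 V3 Z ->
  ~ [/\ dot3 V1 Y > dot3 V1 Z, dot3 V2 Y > dot3 V2 Z & dot3 V3 Y > dot3 V3 Z].
Proof.
move=> hn [a1 [a2 [a3 [ha1 ha2 ha3 hY]]]] [b1 [b2 [b3 [hb1 hb2 hb3 hZ]]]] [h1 h2 h3].
have eYY : dot3 Y Y = dot3 Z Z.
  by rewrite -(sqr_sqrtr (dot3_ge0 _ Y)) -(sqr_sqrtr (dot3_ge0 _ Z)); move: hn; rewrite /enorm3 => ->.
have e1 : forall W, dot3 Y W = a1 * dot3 V1 W + a2 * dot3 V2 W + a3 * dot3 V3 W.
  by move=> W; rewrite {1}hY -addrA !dot3_lin dot3Z addrA.
have e2 : forall W, dot3 Z W = b1 * dot3 V1 W + b2 * dot3 V2 W + b3 * dot3 V3 W.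
  by move=> W; rewrite {1}hZ -addrA !dot3_lin dot3Z addrA.
have := e1 Y; have := e1 Z; have := e2 Y; have := e2 Z.
rewrite (dot3C _ Z Y) eYY.
set p1 := dot3 V1 Y; set q1 := dot3 V1 Z.
set p2 := dot3 V2 Y; set q2 := dot3 V2 Z.
set p3 := dot3 V3 Y; set q3 := dot3 V3 Z.
move=> E1 E2 E3 E4.
have k1 : 0 < a1 * (p1 - q1) by apply: mulr_gt0 => //; rewrite subr_gt0.
have k2 : 0 < a2 * (p2 - q2) by apply: mulr_gt0 => //; rewrite subr_gt0.
have k3 : 0 < a3 * (p3 - q3) by apply: mulr_gt0 => //; rewrite subr_gt0.
have k4 : 0 < b1 * (p1 - q1) by apply: mulr_gt0 => //; rewrite subr_gt0.
have k5 : 0 < b2 * (p2 - q2) by apply: mulr_gt0 => //; rewrite subr_gt0.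
have k6 : 0 < b3 * (p3 - q3) by apply: mulr_gt0 => //; rewrite subr_gt0.
rewrite !mulrBr in k1 k2 k3 k4 k5 k6.
lra.
Qed.
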